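(* Let $D\ge2$ and let $\Lambda\subseteq\mathbb Z^D$ be the lattice with generator matrix $G=(v_{jr})_{1\le j,r\le D}$, where row $j$ is $(v_{j1},\dots,v_{jD})$. Assume $\Lambda$ induces a lattice tiling of the shape $\mathcal S$. Let $\ell_1\ge1$ and $\ell_2\ge0$ be integers with $\ell_1+\ell_2\le D$. Let $\delta=(d_1,\dots,d_D)$ with <ul> <li>$d_r=+1$ for $1\le r\le\ell_1$,</li> <li>$d_r=-1$ for $\ell_1<r\le\ell_1+\ell_2$,</li> <li>$d_r=0$ for $\ell_1+\ell_2<r\le D$.</li> </ul> For $2\le r\le D$ and $1\le j\le D$ define <ul> <li>$u_{rj}=v_{jr}-v_{j1}$ if $2\le r\le \ell_1$,</li> <li>$u_{rj}=v_{jr}+v_{j1}$ if $\ell_1+1\le r\le \ell_1+\ell_2$,</li> <li>$u_{rj}=v_{jr}$ if $\ell_1+\ell_2+1\le r\le D$.</li> </ul> Let $H$ be the $(D-1)\times D$ matrix $(u_{rj})_{2\le r\le D,\,1\le j\le D}$. For $1\le i\le D$, let $H_i$ be the $(D-1)\times(D-1)$ matrix obtained from $H$ by deleting its $i$-th column. Then $(\Lambda,\mathcal S,\delta)$ defines a folding if and only if $\gcd(\det H_1,\det H_2,\dots,\det H_D)=1$.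
   Context: Let $D\ge 1$. A shape is a finite nonempty set $\mathcal S\subset\mathbb Z^D$ containing the origin; the origin is its distinguished center point. A lattice is a set $\Lambda=\{\sum_{j=1}^D u_jv_j : u_1,\dots,u_D\in\mathbb Z\}$ for linearly independent $v_1,\dots,v_D\in\mathbb Z^D$. The $D\times D$ matrix $G$ whose rows are $v_1,\dots,v_D$ is a generator matrix of $\Lambda$. $\Lambda$ induces a lattice tiling of $\mathcal S$ if the translates $\mathcal S+\lambda$, $\lambda\in\Lambda$, are pairwise disjoint and cover $\mathbb Z^D$. The translate $\mathcal S+\lambda$ is called the copy of $\mathcal S$ with center $\lambda$. For $x\in\mathbb Z^D$, $c(x)$ denotes the unique $\lambda\in\Lambda$ with $x\in\mathcal S+\lambda$. A ternary vector (direction) is a nonzero $\delta\in\{-1,0,+1\}^D$. The folded-row of $(\Lambda,\mathcal S,\delta)$ is the sequence $p_0,p_1,p_2,\dots$ defined by $p_0=0$ and $p_{k+1}=(p_k+\delta)-c(p_k+\delta)$. Equivalently, $p_{k+1}=p_k+\delta$ if $p_k+\delta\in\mathcal S$; otherwise $p_{k+1}$ is $p_k+\delta$ minus the center of the copy of $\mathcal S$ containing $p_k+\delta$. The triple $(\Lambda,\mathcal S,\delta)$ defines a folding if every element of $\mathcal S$ occurs in its folded-row. *)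

(* Defs.v *)
(* Points of Z^D are row vectors 'rV[int]_D; indices are 0-based. *)
From HB Require Import structures.
From mathcomp Require Import all_boot all_order all_algebra.
Set Implicit Arguments. Unset Strict Implicit. Unset Printing Implicit Defensive.
Import Order.TTheory GRing.Theory Num.Theory.
Local Open Scope ring_scope.

(* A shape: a finite list of points (duplicates irrelevant) containing 0. *)
Definition is_shape (D : nat) (S : seq 'rV[int]_D) : Prop := (0 : 'rV[int]_D) \in S.

(* Lattice generated by the rows of G; rows linearly independent <-> det G != 0. *)
Definition gen_matrix (D : nat) (G : 'M[int]_D) : Prop := \det G != 0.

Definition in_lattice (D : nat) (G : 'M[int]_D) (x : 'rV[int]_D) : Prop :=
  exists u : 'rV[int]_D, x = u *m G.

Definition lattice_tiling (D : nat) (G : 'M[int]_D) (S : seq 'rV[int]_D) : Prop :=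
  (forall x : 'rV[int]_D, exists lam, in_lattice G lam /\ x - lam \in S) /\
  (forall x lam lam' : 'rV[int]_D, in_lattice G lam -> in_lattice G lam' ->
     x - lam \in S -> x - lam' \in S -> lam = lam').

(* p is the folded-row of (Lambda, S, delta): p_0 = 0 and
   p_{k+1} = (p_k + delta) - c(p_k + delta), i.e. p_{k+1} lies in S and differs
   from p_k + delta by a lattice vector (which is then c(p_k + delta)). *)
Definition folded_row (D : nat) (G : 'M[int]_D) (S : seq 'rV[int]_D)
  (delta : 'rV[int]_D) (p : nat -> 'rV[int]_D) : Prop :=
  p 0%N = 0 /\
  forall k : nat, p k.+1 \in S /\ in_lattice G (p k + delta - p k.+1).

Definition defines_folding (D : nat) (G : 'M[int]_D) (S : seq 'rV[int]_D)
  (delta : 'rV[int]_D) : Prop :=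
  exists p : nat -> 'rV[int]_D, folded_row G S delta p /\
    forall s, s \in S -> exists k : nat, p k = s.

Definition delta_vec (D l1 l2 : nat) : 'rV[int]_D :=
  \row_(r < D) (if (r < l1)%N then 1 else if (r < l1 + l2)%N then -1 else 0).

(* H = (u_{rj}), rows r = 2..D (0-based r = 1..D-1, i.e. lift ord0 i),
   columns j = 1..D; u_{rj} built from v_{jr} = G j r. Here D = n.+2. *)
Definition Hmat (n l1 l2 : nat) (G : 'M[int]_n.+2) : 'M[int]_(n.+1, n.+2) :=
  \matrix_(i < n.+1, j < n.+2)
    (let r := lift ord0 i in
     if (r < l1)%N then G j r - G j ord0
     else if (r < l1 + l2)%N then G j r + G j ord0
     else G j r).

Definition gcd_minors (n l1 l2 : nat) (G : 'M[int]_n.+2) : nat :=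
  \big[gcdn/0%N]_(i < n.+2) `|\det (col' i (Hmat l1 l2 G))|%N.

(* Main.v *)
Require Import Defs.
From HB Require Import structures.
From mathcomp Require Import all_boot all_order all_algebra.
From Stdlib Require Import ClassicalEpsilon.
Set Implicit Arguments. Unset Strict Implicit. Unset Printing Implicit Defensive.
Import Order.TTheory GRing.Theory Num.Theory.
Local Open Scope ring_scope.

Lemma bezout_big (k : nat) (F : nat -> int) :
  exists c : nat -> int, \sum_(i < k) c i * F i = (\big[gcdn/0%N]_(i < k) `|F i|%N)%:Z.
Proof.
elim: k => [|k [c IH]]; first by exists (fun _ => 0); rewrite !big_ord0.
have [u [v Huv]] := Bezoutz (\big[gcdn/0%N]_(i < k) `|F i|%N)%:Z (F k).
exists (fun i => if i == k then v else u * c i).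
rewrite big_ord_recr big_ord_recr /= eqxx.
have -> : \sum_(i < k) (if (widen_ord (leqnSn k) i : nat) == k then v else u * c i) * F i
   = u * \sum_(i < k) c i * F i.
  rewrite mulr_sumr; apply: eq_bigr => i _ /=.
  by rewrite (ltn_eqF (ltn_ord i)) mulrA.
by rewrite IH Huv /gcdz absz_nat.
Qed.

Section Gcd.
Variables (m : nat) (H : 'M[int]_(m, m.+1)).

Definition wv (j : 'I_m.+1) : int := (-1) ^+ j * \det (col' j H).

Definition Mc (c : 'rV[int]_m.+1) : 'M[int]_m.+1 :=
  \matrix_(i, j) match unlift ord0 i with None => c 0 j | Some i' => H i' j end.

Lemma detMc c : \det (Mc c) = \sum_j c 0 j * wv j.
Proof.
rewrite (expand_det_row _ ord0); apply: eq_bigr => j _.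
rewrite /cofactor /wv mxE unlift_none add0n; congr (_ * (_ * \det _)).
by apply/matrixP => i l; rewrite !mxE liftK.
Qed.

Definition Kk (X : 'M[int]_(m.+1, m)) (k : 'cV[int]_m.+1) : 'M[int]_m.+1 :=
  \matrix_(r, j) match unlift ord0 j with None => k r 0 | Some j' => X r j' end.

Lemma keyK X c k : H *m X = 1%:M -> H *m k = 0 ->
  \det (Mc c) * \det (Kk X k) = (c *m k) 0 0.
Proof.
move=> HX Hk; rewrite -det_mulmx (expand_det_col _ ord0) big_ord_recl.
rewrite big1 ?addr0; last first.
  move=> i _; rewrite mxE.
  have -> : \sum_j Mc c (lift ord0 i) j * Kk X k j ord0 = (H *m k) i 0.
    by rewrite mxE; apply: eq_bigr => j _; rewrite !mxE liftK unlift_none.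
  by rewrite Hk mxE mul0r.
rewrite /cofactor expr0 mul1r.
have -> : row' ord0 (col' ord0 (Mc c *m Kk X k)) = 1%:M.
  rewrite -HX; apply/matrixP => i l; rewrite !mxE; apply: eq_bigr => j _.
  by rewrite !mxE !liftK.
rewrite det1 mulr1 !mxE; apply: eq_bigr => j _.
by rewrite !mxE unlift_none.
Qed.

Definition spanH := forall y : 'cV[int]_m, exists v : 'cV[int]_m.+1, H *m v = y.

Lemma gcd_span : spanH <-> (\big[gcdn/0%N]_(i < m.+1) `|\det (col' i H)|%N = 1%N).
Proof.
have absw : forall j : 'I_m.+1, `|wv j|%N = `|\det (col' j H)|%N.
  by move=> j; rewrite /wv abszMsign.
split.
- move=> sp.
  have /fin_all_exists [f Hf] : forall i : 'I_m, exists v : 'cV[int]_m.+1,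
      H *m v = col i 1%:M by move=> i; apply: sp.
  pose X : 'M[int]_(m.+1, m) := \matrix_(r, i) f i r 0.
  have HX : H *m X = 1%:M.
    apply/matrixP => i l; have := congr1 (fun A : 'M[int]_(m,1) => A i 0) (Hf l).
    by rewrite !mxE => <-; apply: eq_bigr => j _; rewrite !mxE.
  pose P : 'M[int]_m.+1 := 1%:M - X *m H.
  have HP : H *m P = 0 by rewrite mulmxBr mulmx1 mulmxA HX mul1mx subrr.
  pose z j := \det (Kk X (col j P)).
  have wz : forall i j, wv i * z j = P i j.
    move=> i j; have HPj : H *m col j P = 0 by rewrite colE mulmxA HP mul0mx.
    have := keyK (row i 1%:M) HX HPj.
    rewrite detMc -row_mul mul1mx !mxE => <-; congr (_ * _).
    rewrite (bigD1 i) //= big1 ?addr0; first by rewrite !mxE eqxx mul1r.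
    by move=> r /negbTE; rewrite !mxE eq_sym => ->; rewrite mul0r.
  have tr1 : \sum_j wv j * z j = 1.
    transitivity (\tr P); first by apply: eq_bigr => j _; rewrite wz.
    rewrite /P raddfB /= mxtrace_mulC HX !mxtrace1.
    by rewrite -natrB // subSnn.
  apply/eqP; rewrite -dvdn1.
  have : ((\big[gcdn/0%N]_(i < m.+1) `|\det (col' i H)|%N)%:Z %| 1)%Z.
    rewrite -[X in (_ %| X)%Z]tr1; apply: rpred_sum => j _; apply: dvdz_mulr.
    by rewrite dvdzE absz_nat absw; apply: (biggcdn_inf j).
  by rewrite dvdzE absz_nat.
- move=> g1 y.
  have [c Hc] := bezout_big m.+1 (fun j => wv (inord j)).
  pose cr : 'rV[int]_m.+1 := \row_j c j.
  have dM : \det (Mc cr) = 1.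
    rewrite detMc.
    have -> : \sum_j cr 0 j * wv j = \sum_(j < m.+1) c j * wv (inord j).
      by apply: eq_bigr => j _; rewrite mxE inord_val.
    rewrite Hc -[RHS]/(Posz 1%N) -g1; congr Posz; apply: eq_bigr => j _.
    by rewrite inord_val absw.
  pose zz : 'cV[int]_m.+1 := \col_i match unlift ord0 i with None => 0 | Some i' => y i' 0 end.
  exists (\adj (Mc cr) *m zz).
  have E : Mc cr *m (\adj (Mc cr) *m zz) = zz.
    by rewrite mulmxA mul_mx_adj dM mul1mx.
  apply/matrixP => i l; rewrite ord1.
  have := congr1 (fun A : 'cV[int]_m.+1 => A (lift ord0 i) 0) E; rewrite [zz _ _]mxE liftK => <-.
  by rewrite !mxE; apply: eq_bigr => j _; rewrite !mxE liftK.
Qed.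

End Gcd.

Section Fold.
Variables (n : nat) (G : 'M[int]_n.+2) (S : seq 'rV[int]_n.+2) (l1 l2 : nat).
Hypothesis l1pos : (1 <= l1)%N.
Local Notation dl := (delta_vec n.+2 l1 l2).

Lemma lat0 : in_lattice G 0.
Proof. by exists 0; rewrite mul0mx. Qed.
Lemma latD x y : in_lattice G x -> in_lattice G y -> in_lattice G (x + y).
Proof. by move=> [u ->] [v ->]; exists (u + v); rewrite mulmxDl. Qed.
Lemma latN x : in_lattice G x -> in_lattice G (- x).
Proof. by move=> [u ->]; exists (- u); rewrite mulNmx. Qed.
Lemma latZ a x : in_lattice G x -> in_lattice G (a *: x).
Proof. by move=> [u ->]; exists (a *: u); rewrite scalemxAl. Qed.

Definition gen := forall x : 'rV[int]_n.+2, exists u (a : int), x = u *m G + a *: dl.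

Lemma fold_congr p : folded_row G S dl p -> forall k, in_lattice G (k%:Z *: dl - p k).
Proof.
move=> [p0 Hp]; elim=> [|k IH]; first by rewrite p0 scale0r subr0; exact: lat0.
have -> : k.+1%:Z *: dl - p k.+1 = (k%:Z *: dl - p k) + (p k + dl - p k.+1).
  by rewrite !addrA subrK intS scalerDl scale1r (addrC dl).
by apply: latD => //; case: (Hp k).
Qed.

Lemma fold_gen : lattice_tiling G S -> defines_folding G S dl -> gen.
Proof.
move=> [cov _] [p [fr Hall]] x.
have [lam [[w Hw] Hs]] := cov x.
have [k Hk] := Hall _ Hs.
have [v Hv] := fold_congr fr k.
exists (w - v), k%:Z.
have E : x = lam + p k by rewrite Hk addrC subrK.
have E2 : p k = k%:Z *: dl - v *m G by rewrite -Hv opprB addrC subrK.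
rewrite E E2 Hw mulmxBl.
by rewrite (addrC (_ *: dl)) addrA.
Qed.

Lemma gen_fold : gen_matrix G -> is_shape S -> lattice_tiling G S -> gen ->
  defines_folding G S dl.
Proof.
move=> dG sh [cov uniq] gn.
have cov' : forall x, exists s, s \in S /\ in_lattice G (x - s).
  move=> x; have [lam [Hl Hs]] := cov x; exists (x - lam); split => //.
  by rewrite opprB addrC subrK.
pose pick x := proj1_sig (constructive_indefinite_description _ (cov' x)).
have pickP : forall x, pick x \in S /\ in_lattice G (x - pick x).
  by move=> x; rewrite /pick; case: constructive_indefinite_description.
pose p k := iter k (fun q => pick (q + dl)) 0.
have fr : folded_row G S dl p by split => // k; apply: pickP.
exists p; split => // s Hs.
have pS : forall k, p k \in S by case=> [|k] //; exact: (proj1 (pickP _)).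
have [u [a Ha]] := gn s.
set d := \det G.
have dl_lat : in_lattice G (d *: dl).
  by exists (dl *m \adj G); rewrite -mulmxA mul_adj_mx mul_mx_scalar.
have ge0 : 0 <= (a %% d)%Z by apply: modz_ge0.
exists `|(a %% d)%Z|%N.
have Hl : in_lattice G (s - p `|(a %% d)%Z|%N).
  have -> : s - p `|(a %% d)%Z|%N = u *m G + ((a %/ d)%Z *: (d *: dl))
         + (`|(a %% d)%Z|%N%:Z *: dl - p `|(a %% d)%Z|%N).
    rewrite Ha {1}(divz_eq a d) gez0_abs // scalerA scalerDl !addrA.
    by rewrite (addrC _ ((a %% d)%Z *: dl)) !addrA -(addrA _ _ (- _)).
  by apply: latD; [apply: latD; [exists u|apply: latZ]|apply: fold_congr].
have := uniq s 0 (s - p `|(a %% d)%Z|%N) lat0 Hl.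
rewrite subr0 opprB addrC subrK => /(_ Hs (pS _)) /esym/eqP.
by rewrite subr_eq0 => /eqP.
Qed.

End Fold.

Section Phi.
Variables (n : nat) (G : 'M[int]_n.+2) (l1 l2 : nat).
Hypothesis l1pos : (1 <= l1)%N.
Local Notation dl := (delta_vec n.+2 l1 l2).

Definition phi (x : 'rV[int]_n.+2) : 'cV[int]_n.+1 :=
  \col_i (if (lift ord0 i < l1)%N then x 0 (lift ord0 i) - x 0 ord0
          else if (lift ord0 i < l1 + l2)%N then x 0 (lift ord0 i) + x 0 ord0
          else x 0 (lift ord0 i)).

Lemma phiD x y : phi (x + y) = phi x + phi y.
Proof.
apply/matrixP => i j; rewrite !mxE.
case: ifP => _; first by rewrite opprD addrACA.
by case: ifP => _ //; rewrite addrACA.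
Qed.

Lemma phiZ a x : phi (a *: x) = a *: phi x.
Proof.
apply/matrixP => i j; rewrite !mxE.
case: ifP => _; first by rewrite mulrBr.
by case: ifP => _ //; rewrite mulrDr.
Qed.

Lemma phiB x y : phi (x - y) = phi x - phi y.
Proof. by rewrite phiD -scaleN1r phiZ scaleN1r. Qed.

Lemma phi_mul u : phi (u *m G) = Hmat l1 l2 G *m u^T.
Proof.
apply/matrixP => i j; rewrite ord1 !mxE; under [in RHS]eq_bigr do rewrite !mxE.
rewrite /=.
case h1: (bump 0 i < l1)%N => /=.
  rewrite -sumrB; apply: eq_bigr => k _.
  by rewrite mulrBl !(mulrC (u 0 k)).
case h2: (bump 0 i < l1 + l2)%N => /=.
  rewrite -big_split; apply: eq_bigr => k _.
  by rewrite mulrDl !(mulrC (u 0 k)).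
by apply: eq_bigr => k _; rewrite mulrC.
Qed.

Lemma phi_delta : phi dl = 0.
Proof.
apply/matrixP => i j; rewrite !mxE /= l1pos.
case h1: (lift ord0 i < l1)%N => /=; first by rewrite subrr.
by case h2: (lift ord0 i < l1 + l2)%N => /=; rewrite ?addNr.
Qed.

Lemma phi_ker z : phi z = 0 -> z = z 0 ord0 *: dl.
Proof.
move=> Hz; apply/matrixP => a r; rewrite ord1 !mxE.
case: (unliftP ord0 r) => [i ->|->]; last by rewrite /= l1pos mulr1.
have := congr1 (fun A : 'cV[int]_n.+1 => A i 0) Hz; rewrite !mxE.
case h1: (lift ord0 i < l1)%N => /=.
  by move/eqP; rewrite subr_eq0 => /eqP ->; rewrite mulr1.
case h2: (lift ord0 i < l1 + l2)%N => /=.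
  by move/eqP; rewrite addr_eq0 => /eqP ->; rewrite mulrN1.
by move=> ->; rewrite mulr0.
Qed.

Lemma gen_span : gen G l1 l2 <-> spanH (Hmat l1 l2 G).
Proof.
split.
- move=> gn y.
  pose x : 'rV[int]_n.+2 := \row_r match unlift ord0 r with None => 0 | Some i => y i 0 end.
  have Px : phi x = y.
    apply/matrixP => i j; rewrite ord1 !mxE liftK unlift_none.
    by case: ifP => _; [|case: ifP => _]; rewrite ?subr0 ?addr0.
  have [u [a Ha]] := gn x.
  exists u^T; rewrite -phi_mul -Px Ha phiD phiZ phi_delta scaler0 addr0 //.
- move=> sp x.
  have [v Hv] := sp (phi x).
  exists v^T; exists ((x - v^T *m G) 0 ord0).
  have Hz : phi (x - v^T *m G) = 0 by rewrite phiB phi_mul trmxK Hv subrr.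
  by rewrite -(phi_ker Hz) addrC subrK.
Qed.

End Phi.

Theorem mainTheorem5 (n : nat) (G : 'M[int]_n.+2) (S : seq 'rV[int]_n.+2)
  (l1 l2 : nat) :
  gen_matrix G -> is_shape S -> lattice_tiling G S ->
  (1 <= l1)%N -> (l1 + l2 <= n.+2)%N ->
  defines_folding G S (delta_vec n.+2 l1 l2) <-> gcd_minors l1 l2 G = 1%N.
Proof.
move=> dG sh tl l1pos _; rewrite /gcd_minors -gcd_span -gen_span //.
split; [exact: fold_gen | exact: gen_fold].
Qed.
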